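(* Let $m\le n$, let $\mathbf A\in\mathbb R^{m\times n}$ have columns in general position, i.e., any $m$ columns of $\mathbf A$ span $\mathbb R^m$, and let $\mathbf b\in\mathbb R^m$. Then every minimizer $\mathbf z^\star\in\arg\min_{\mathbf z\in\mathbb R^n}\|\mathbf z\|_\infty$ subject to $\mathbf A\mathbf z=\mathbf b$ satisfies $$\#\{i\in[n]:|z^\star_i|=\|\mathbf z^\star\|_\infty\}\ge n-m+1.$$ *)

(* Defs.v *)
From mathcomp Require Import all_boot all_order all_algebra.
From mathcomp Require Export reals.
Set Implicit Arguments. Unset Strict Implicit. Unset Printing Implicit Defensive.
Import Order.TTheory GRing.Theory Num.Theory.
Local Open Scope ring_scope.

Definition linf_norm (R : realType) (n : nat) (z : 'cV[R]_n) : R :=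
  \big[Num.max/0]_(i < n) `|z i ord0|.

(* Columns of A in general position: any m (distinct) columns span R^m,
   i.e. the m x m submatrix formed by them has rank m. *)
Definition cols_general_position (R : realType) (m n : nat) (A : 'M[R]_(m, n)) : Prop :=
  forall f : 'I_m -> 'I_n, injective f -> \rank (colsub f A) = m.

Definition linf_minimizer (R : realType) (m n : nat) (A : 'M[R]_(m, n))
  (b : 'cV[R]_m) (z : 'cV[R]_n) : Prop :=
  A *m z = b /\ forall w : 'cV[R]_n, A *m w = b -> linf_norm z <= linf_norm w.

(* Main.v *)
Require Import Defs.
From mathcomp Require Import all_boot all_order all_algebra.
From mathcomp Require Import reals.
From mathcomp Require Import ring lra zify.
Import Order.TTheory GRing.Theory Num.Theory.
Local Open Scope ring_scope.

Lemma pos_lb (R : realFieldType) (I : finType) (g : I -> R) :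
  (forall i, 0 < g i) -> exists2 e, 0 < e & forall i, e <= g i.
Proof.
move=> gp.
have: forall s : seq I, exists2 e : R, 0 < e & forall i, i \in s -> e <= g i.
  elim=> [|x s [e e0 He]]; first by exists 1.
  exists (Num.min (g x) e); first by rewrite lt_min gp e0.
  move=> i; rewrite inE => /orP[/eqP->|/He ei]; rewrite ge_min ?lexx //.
  by rewrite ei orbT.
case/(_ (enum I)) => e e0 He; exists e => // i; apply: He; by rewrite mem_enum.
Qed.

Lemma le_linf (R : realType) (n : nat) (z : 'cV[R]_n) i :
  `|z i ord0| <= linf_norm z.
Proof.
rewrite /linf_norm.
have: i \in index_enum 'I_n by rewrite mem_index_enum.
elim: (index_enum 'I_n) => [//|x s IH]; rewrite big_cons inE.
case/orP=> [/eqP->|/IH h]; rewrite le_max ?lexx //.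
by rewrite h orbT.
Qed.

Lemma linf_ge0 (R : realType) (n : nat) (z : 'cV[R]_n) : 0 <= linf_norm z.
Proof.
rewrite /linf_norm; apply: (big_ind (fun x : R => 0 <= x)) => //.
  by move=> x y hx hy; rewrite le_max hx.
Qed.

Lemma linf_lt (R : realType) (n : nat) (z : 'cV[R]_n) t :
  0 < t -> (forall i, `|z i ord0| < t) -> linf_norm z < t.
Proof.
move=> t0 h; rewrite /linf_norm; apply: (big_ind (fun x : R => x < t)) => //.
by move=> x y hx hy; rewrite gt_max hx hy.
Qed.

Arguments pos_lb {R I g}.
Arguments le_linf {R n}.
Arguments linf_ge0 {R n}.
Arguments linf_lt {R n z t}.

Theorem lemmaA2 (R : realType) (m n : nat) (A : 'M[R]_(m, n)) (b : 'cV[R]_m)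
  (hm0 : (0 < m)%N) (hmn : (m <= n)%N)
  (hA : cols_general_position A) (z : 'cV[R]_n)
  (hz : linf_minimizer A b z) :
  (n - m + 1 <= #|[set i : 'I_n | (`|z i ord0| == linf_norm z)%R]|)%N.
Proof.
set t := linf_norm z.
set S := [set i : 'I_n | _].
case: (leqP (n - m + 1) #|S|) => // hlt; exfalso.
have hS : forall i, (i \in S) = (`|z i ord0| == t) by move=> i; rewrite inE.
have tpos : 0 < t.
  rewrite lt_neqAle linf_ge0 andbT; apply/eqP => t0.
  have ST : S = setT.
    apply/setP => i; rewrite hS inE eq_le le_linf /= -t0.
    by rewrite normr_ge0.
  by move: hlt; rewrite ST cardsT card_ord; lia.
have hT : (m <= #|~: S|)%N.
  by move: (cardsC S) hlt; rewrite card_ord; lia.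
pose f (j : 'I_m) : 'I_n := enum_val (widen_ord hT j).
have finj : injective f.
  move=> j k /enum_val_inj /(congr1 val) /= h; exact: val_inj.
have fS : forall j, f j \notin S.
  move=> j; have := enum_valP (widen_ord hT j); by rewrite inE.
set B := colsub f A.
have Bu : B \in unitmx by rewrite -row_free_unit /row_free hA.
pose d1 : 'cV[R]_n := \col_i (if i \in S then - Num.sg (z i ord0) else 0).
pose P : 'M[R]_(n, m) := \matrix_(i, j) ((f j == i)%:R).
pose x := invmx B *m (- (A *m d1)).
pose d2 := P *m x.
have AP : A *m P = B.
  apply/matrixP => k j; rewrite !mxE (bigD1 (f j)) //= mxE eqxx mulr1.
  rewrite big1 ?addr0 // => i /negbTE; rewrite mxE eq_sym => ->; by rewrite mulr0.
have Ad : A *m (d1 + d2) = 0.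
  by rewrite mulmxDr /d2 mulmxA AP /x mulmxA mulmxV // mul1mx subrr.
have d2S : forall i, i \in S -> d2 i ord0 = 0.
  move=> i iS; rewrite mxE big1 // => j _; rewrite mxE.
  have -> : (f j == i) = false.
    by apply/negbTE; apply: contraNneq (fS j) => ->.
  by rewrite mul0r.
pose g i := if i \in S then t else (t - `|z i ord0|) / (1 + `|d2 i ord0|).
have gp : forall i, 0 < g i.
  move=> i; rewrite /g; case: ifP => iS //.
  apply: divr_gt0; last by have := normr_ge0 (d2 i ord0); lra.
  rewrite subr_gt0 lt_neqAle le_linf andbT; by rewrite -hS iS.
case: (pos_lb gp) => e0 e0p He0.
set e := Num.min t e0.
have ep : 0 < e by rewrite lt_min tpos e0p.
have et : e <= t by rewrite ge_min lexx.
have eg : forall i, e <= g i by move=> i; rewrite ge_min He0 orbT.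
pose w := z + e *: (d1 + d2).
have Aw : A *m w = b.
  by rewrite mulmxDr -scalemxAr Ad scaler0 addr0 hz.1.
have := hz.2 w Aw; rewrite -/t => tw.
have : linf_norm w < t; last by lra.
apply: linf_lt => // i.
have -> : w i ord0 = z i ord0 + e * (d1 i ord0 + d2 i ord0) by rewrite /w !mxE.
rewrite [d1 i ord0]mxE.
have zi := le_linf z i; rewrite -/t in zi.
have := eg i; rewrite /g.
case: ifP => iS egi.
  rewrite d2S // addr0.
  move: iS; rewrite hS => /eqP zt.
  have [zp|zn|z0] := ltrgt0P (z i ord0).
  - rewrite gtr0_sg // ltr_norml; rewrite gtr0_norm // in zt; lra.
  - rewrite ltr0_sg // ltr_norml; rewrite ltr0_norm // in zt; lra.
  - by move: zt tpos; rewrite z0 normr0 => <-; rewrite ltxx.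
rewrite add0r.
have nd := normr_ge0 (d2 i ord0).
have zlt : `|z i ord0| < t by rewrite lt_neqAle zi andbT -hS iS.
move: egi; rewrite ler_pdivlMr; last by lra.
move=> h.
apply: (le_lt_trans (ler_normD _ _)).
rewrite normrM (gtr0_norm ep).
nra.
Qed.
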